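(* Let $G$ be a maximal $3$-$\gamma_{c}$-vertex critical graph of order $n$ with clique number $\omega$. Then $\omega\leq n-3$, and equality holds if and only if $G$ is the cycle $C_{5}$.
   Context: All graphs are finite, simple and connected. A set $D\subseteq V(G)$ is a connected dominating set of $G$ if every vertex of $G$ is in $D$ or adjacent to a vertex of $D$, and $G[D]$ is connected; $\gamma_{c}(G)$ is the minimum cardinality of such a set. $G$ is $k$-$\gamma_{c}$-edge critical if $\gamma_{c}(G)=k$ and $\gamma_{c}(G+uv)<k$ for every pair of non-adjacent vertices $u,v$. A $2$-connected graph $G$ is $k$-$\gamma_{c}$-vertex critical if $\gamma_{c}(G)=k$ and $\gamma_{c}(G-v)<k$ for every $v\in V(G)$. $G$ is maximal $k$-$\gamma_{c}$-vertex critical if it is both $k$-$\gamma_{c}$-edge critical and $k$-$\gamma_{c}$-vertex critical. *)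

(* Defs.v *)
From mathcomp Require Import all_boot.
Set Implicit Arguments. Unset Strict Implicit. Unset Printing Implicit Defensive.

Section Graphs.
Variable T : finType.

Definition simple_graph (e : rel T) : Prop := symmetric e /\ irreflexive e.

Definition induced (e : rel T) (S : {set T}) : rel T :=
  [rel x y | [&& e x y, x \in S & y \in S]].

Definition connected_in (e : rel T) (S : {set T}) : bool :=
  (S != set0) && [forall x in S, forall y in S, connect (induced e S) x y].

Definition connected_graph (e : rel T) : bool := connected_in e setT.

Definition two_connected (e : rel T) : bool :=
  [&& 2 < #|T|, connected_graph e & [forall v, connected_in e (setT :\ v)]].

Definition is_cds (e : rel T) (S D : {set T}) : bool :=
  [&& D \subset S,
      [forall x in S, (x \in D) || [exists y in D, e x y]] &
      connected_in e D].

(* connected domination number of G[S]; equals #|T|.+1 ("infinity") if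
   G[S] has no connected dominating set *)
Definition gamma_c (e : rel T) (S : {set T}) : nat :=
  \big[minn/#|T|.+1]_(D : {set T} | is_cds e S D) #|D|.

Definition gamma_c_G (e : rel T) : nat := gamma_c e setT.

Definition add_edge (e : rel T) (u v : T) : rel T :=
  [rel x y | [|| e x y, (x == u) && (y == v) | (x == v) && (y == u)]].

Definition edge_critical (k : nat) (e : rel T) : Prop :=
  gamma_c_G e = k /\
  forall u v : T, u != v -> ~~ e u v -> gamma_c_G (add_edge e u v) < k.

(* G - v is the induced subgraph on V \ {v} *)
Definition vertex_critical (k : nat) (e : rel T) : Prop :=
  two_connected e /\ gamma_c_G e = k /\
  forall v : T, gamma_c e (setT :\ v) < k.

Definition maximal_vertex_critical (k : nat) (e : rel T) : Prop :=
  edge_critical k e /\ vertex_critical k e.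

Definition is_clique (e : rel T) (A : {set T}) : bool :=
  [forall x in A, forall y in A, (x != y) ==> e x y].

Definition clique_number (e : rel T) : nat :=
  \max_(A : {set T} | is_clique e A) #|A|.

End Graphs.

Definition C5_rel : rel 'I_5 :=
  fun i j : 'I_5 => ((i.+1 %% 5) == j :> nat) || ((j.+1 %% 5) == i :> nat).

Definition is_C5 (T : finType) (e : rel T) : Prop :=
  exists f : T -> 'I_5, bijective f /\ forall x y, e x y = C5_rel (f x) (f y).

(* Main.v *)
Require Import Defs.
From mathcomp Require Import all_boot zify.
Set Implicit Arguments. Unset Strict Implicit. Unset Printing Implicit Defensive.

Lemma bigmin_le (I : eqType) (r : seq I) (P : pred I) (F : I -> nat) x i :
  i \in r -> P i -> \big[minn/x]_(j <- r | P j) F j <= F i.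
Proof.
elim: r => // a r IH; rewrite inE big_cons => /orP [/eqP <- -> | ir Pi].
  by rewrite geq_minl.
by case: (P a) => /=; [apply: leq_trans (geq_minr _ _) _|]; apply: IH.
Qed.

Lemma gamma_le (T : finType) (e : rel T) S D0 : is_cds e S D0 -> gamma_c e S <= #|D0|.
Proof. by move=> H; rewrite /gamma_c bigmin_le // mem_index_enum. Qed.

Lemma gamma_ge (T : finType) (e : rel T) S : 2 <= #|T| ->
  (forall D, is_cds e S D -> 3 <= #|D|) -> 3 <= gamma_c e S.
Proof.
move=> HT H; rewrite /gamma_c; apply: (big_ind (fun x => 3 <= x)) => //.
- lia.
Qed.

Lemma connect_step (T : finType) (r : rel T) a b : connect r a b -> a != b -> exists c, r a c.
Proof.
case/connectP => [[|c p]] /=; first by move=> _ ->; rewrite eqxx.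
by move/andP=> [h _] _ _; exists c.
Qed.

Lemma card2_rem (T : finType) (A : {set T}) a b x : #|A| <= 2 -> a \in A -> b \in A ->
  a != b -> x \in A -> (x == a) || (x == b).
Proof.
move=> hA aA bA ab xA; case xa: (x == a) => //=; case xb: (x == b) => //=; exfalso.
have := cardsD1 a A; have := cardsD1 b (A :\ a); have := cardsD1 x (A :\ a :\ b).
rewrite !inE aA bA xA xa xb (eq_sym b a) ab /=; lia.
Qed.

Lemma card3_rem (T : finType) (A : {set T}) a b c x : #|A| <= 3 -> a \in A -> b \in A ->
  c \in A -> a != b -> a != c -> b != c -> x \in A -> [|| x == a, x == b | x == c].
Proof.
move=> hA aA bA cA ab ac bc xA; case xa: (x == a) => //=; case xb: (x == b) => //=; case xc: (x == c) => //=; exfalso.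
have := cardsD1 a A; have := cardsD1 b (A :\ a); have := cardsD1 c (A :\ a :\ b).
have := cardsD1 x (A :\ a :\ b :\ c).
rewrite !inE aA bA cA xA xa xb xc (eq_sym b a) (eq_sym c a) (eq_sym c b) ab ac bc /=; lia.
Qed.

Lemma third (T : finType) (A : {set T}) a b : 3 <= #|A| -> a \in A -> b \in A -> a != b ->
  exists c, [/\ c \in A, c != a & c != b].
Proof.
move=> hA aA bA ab.
have := cardsD1 a A; have := cardsD1 b (A :\ a).
rewrite !inE aA bA (eq_sym b a) ab /= => h1 h2.
have : 0 < #|A :\ a :\ b| by lia.
case/card_gt0P => c; rewrite !inE => /and3P [cb ca cA]; by exists c.
Qed.

Definition dom2 (T : finType) (e : rel T) (S : {set T}) a b :=
  [/\ a \in S, b \in S, (a = b \/ e a b) &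
      forall x, x \in S -> [|| x == a, x == b, e x a | e x b]].

Lemma cds_small (T : finType) (e : rel T) S D : symmetric e -> irreflexive e ->
  is_cds e S D -> #|D| <= 2 -> exists a b, dom2 e S a b.
Proof.
move=> sy ir /and3P [sub /forall_inP dom /andP [ne /forall_inP con]] card.
have [a aD] : exists a, a \in D by apply/set0Pn.
case: (boolP [exists b in D, b != a]) => [/exists_inP [b bD ba] | none].
- have ab : a != b by rewrite eq_sym.
  have onlyab := card2_rem card aD bD ab.
  have eab : e a b.
    have := con a aD => /forall_inP /(_ b bD) /connect_step /(_ ab) [c].
    rewrite /induced /= => /and3P [eac _ cD].
    case/orP: (onlyab c cD) => /eqP ceq; last by rewrite -ceq.
    by rewrite ceq ir in eac.
  exists a, b; split; [exact: (subsetP sub) | exact: (subsetP sub) | by right |].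
  move=> x xS; case/orP: (dom x xS) => [xD | /exists_inP [y yD exy]].
    by case/orP: (onlyab x xD) => ->; rewrite ?orbT.
  by case/orP: (onlyab y yD) => /eqP yeq; rewrite -yeq exy ?orbT.
- have onlya : forall c, c \in D -> c = a.
    move=> c cD; apply/eqP; apply: contraNT none => h; apply/exists_inP; by exists c.
  exists a, a; split; [exact: (subsetP sub) | exact: (subsetP sub) | by left |].
  move=> x xS; case/orP: (dom x xS) => [xD | /exists_inP [y yD exy]].
    by rewrite (onlya x xD) eqxx.
  by rewrite -(onlya y yD) exy ?orbT.
Qed.

Lemma dom2_gamma (T : finType) (e : rel T) a b : symmetric e ->
  dom2 e setT a b -> gamma_c_G e <= 2.
Proof.
move=> sy [_ _ hab dom].
apply: leq_trans (gamma_le (D0 := [set a; b]) _) _; last first.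
  by rewrite cards2; case: (a != b).
apply/and3P; split; first exact: subsetT.
  apply/forall_inP => x _; case/or4P: (dom x (in_setT x)).
  - by move=> /eqP ->; rewrite !inE eqxx.
  - by move=> /eqP ->; rewrite !inE eqxx orbT.
  - by move=> h; apply/orP; right; apply/exists_inP; exists a; rewrite ?inE ?eqxx.
  - by move=> h; apply/orP; right; apply/exists_inP; exists b; rewrite ?inE ?eqxx ?orbT.
apply/andP; split; first by apply/set0Pn; exists a; rewrite !inE eqxx.
have eab : a = b \/ (e a b && e b a) by case: hab => [|h]; [left|right; rewrite h -sy h].
apply/forall_inP => x; rewrite !inE => hx; apply/forall_inP => y; rewrite !inE => hy.
case/orP: hx => /eqP ->; case/orP: hy => /eqP ->; try apply: connect0;
  case: eab => [-> | /andP [h1 h2]]; try apply: connect0; apply: connect1;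
  by rewrite /induced /= ?h1 ?h2 !inE !eqxx ?orbT.
Qed.
Lemma nbr (T : finType) (e : rel T) : connected_graph e -> 2 <= #|T| -> forall v, exists w, e v w.
Proof.
move=> /andP [_ /forall_inP con] /card_gt1P [x [y [_ _ xy]]] v.
have [u uv] : exists u, u != v.
  case: (x =P v) => [xv|xv]; [exists y; rewrite -xv eq_sym // | exists x; exact/eqP].
have := con v (in_setT v) => /forall_inP /(_ u (in_setT u)) /connect_step.
rewrite eq_sym => /(_ uv) [c]; rewrite /induced /= => /andP [h _]; by exists c.
Qed.

Lemma vc_pair (T : finType) (e : rel T) : symmetric e -> irreflexive e ->
  connected_graph e -> 2 < #|T| -> (forall a b, ~ dom2 e setT a b) ->
  forall v, gamma_c e (setT :\ v) < 3 ->
  exists a b, [/\ (a != v) && (b != v), e a b, ~~ e v a, ~~ e v b &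
     forall x, x != v -> [|| x == a, x == b, e x a | e x b]].
Proof.
move=> sy ir con nT nodom v gv.
have [D /andP [cD sD]] : exists D, is_cds e (setT :\ v) D && (#|D| <= 2).
  apply/existsP; apply: contraLR gv => /existsPn H; rewrite -leqNgt.
  apply: gamma_ge; first lia.
  by move=> D cD; have := H D; rewrite cD /= -ltnNge.
have [a [b [aS bS hab dom]]] := cds_small sy ir cD sD.
move: aS bS; rewrite !inE !andbT => av bv.
have dom' : forall x, x != v -> [|| x == a, x == b, e x a | e x b].
  by move=> x xv; apply: dom; rewrite !inE xv.
have nva : ~~ e v a.
  apply/negP => eva; apply: (nodom a b); split; rewrite ?inE //.
  by move=> x _; case: (x =P v) => [->|/eqP xv]; [rewrite eva !orbT | exact: dom'].
have nvb : ~~ e v b.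
  apply/negP => evb; apply: (nodom a b); split; rewrite ?inE //.
  by move=> x _; case: (x =P v) => [->|/eqP xv]; [rewrite evb !orbT | exact: dom'].
have eab : e a b.
  case: hab => // ab; exfalso; subst b.
  have [w evw] := nbr con (ltnW nT) v.
  have wv : w != v by apply/eqP => wv; rewrite wv ir in evw.
  have wa : w != a by apply/eqP => wa; rewrite -wa evw in nva.
  have ewa : e w a by move: (dom' w wv); rewrite (negbTE wa) /= orbb.
  apply: (nodom a w); split; rewrite ?inE //; first by right; rewrite sy.
  move=> x _; case: (x =P v) => [->|/eqP xv]; first by rewrite evw !orbT.
  by case/or4P: (dom' x xv) => ->; rewrite ?orbT.
by exists a, b; split; rewrite ?av ?bv.
Qed.

Lemma clique_edge (T : finType) (e : rel T) K x y : is_clique e K -> x \in K -> y \in K -> x != y -> e x y.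
Proof. by move/forall_inP => /(_ x) H xK yK; move: (H xK) => /forall_inP /(_ y yK) /implyP; apply. Qed.
Theorem corollary3p8 (T : finType) (e : rel T) :
  simple_graph e -> connected_graph e ->
  maximal_vertex_critical 3 e ->
  clique_number e <= #|T| - 3 /\ (clique_number e = #|T| - 3 <-> is_C5 e).
Proof.
move=> [sy ir] con [[g3 _] [/and3P [nT _ _] [_ vc]]].
have nodom : forall a b, ~ dom2 e setT a b.
  by move=> a b /(dom2_gamma sy); rewrite g3.
have vp' := fun v => vc_pair sy ir con nT nodom (vc v).
have clique0 : is_clique e set0 by apply/forall_inP => x; rewrite inE.
case: (@arg_maxnP _ set0 (is_clique e) (fun A => #|A|) clique0) => K KC Kmax.
have omK : clique_number e = #|K|.
  apply/eqP; rewrite eqn_leq; apply/andP; split.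
    by apply/bigmax_leqP => A; exact: Kmax.
  exact: (leq_bigmax_cond (F := fun A : {set T} => #|A|) K KC).
move/card_gt1P: (ltnW nT) => [v0 [_ [_ _ _]]].
have [w0 e0] := nbr con (ltnW nT) v0.
have K2 : 2 <= #|K|.
  rewrite -omK; apply: leq_trans (leq_bigmax_cond (F := fun A : {set T} => #|A|) [set v0; w0] _).
    by rewrite cards2; case: (v0 =P w0) => // h; rewrite h ir in e0.
  apply/forall_inP => x; rewrite !inE => hx; apply/forall_inP => y; rewrite !inE => hy.
  apply/implyP => xy.
  case/orP: hx => /eqP ?; case/orP: hy => /eqP ?; subst; try by rewrite eqxx in xy.
  - exact e0.
  - rewrite sy; exact e0.
move/card_gt1P: (K2) => [v1 [v2 [v1K v2K v12]]].
set R := ~: K.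
have hcard : #|K| + #|R| = #|T| := cardsC K.
have inR : forall x, (x \in R) = (x \notin K) by move=> x; rewrite inE.
have inRab : forall v a, v \in K -> ~~ e v a -> a != v -> a \in R.
  move=> v a vK na av; rewrite inR; apply/negP => aK.
  by move: na; rewrite (clique_edge KC vK aK) // eq_sym.
have v21 : v2 != v1 by rewrite eq_sym.
have m3 : 3 <= #|R|.
  have [a1 [b1 [/andP [a1v b1v] e1 n1a n1b d1]]] := vp' v1.
  have [a2 [b2 [/andP [a2v b2v] e2 n2a n2b d2]]] := vp' v2.
  have a1R := inRab _ _ v1K n1a a1v; have b1R := inRab _ _ v1K n1b b1v.
  have a2R := inRab _ _ v2K n2a a2v; have b2R := inRab _ _ v2K n2b b2v.
  have [c [cR ec]] : exists c, c \in R /\ e v2 c.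
    case/or4P: (d1 v2 v21) => [/eqP h|/eqP h|h|h].
    - by move: a1R; rewrite -h inR v2K.
    - by move: b1R; rewrite -h inR v2K.
    - by exists a1; split; rewrite // sy.
    - by exists b1; split; rewrite // sy.
  rewrite leqNgt; apply/negP => h.
  have ab2 : a2 != b2 by apply/eqP => h'; rewrite h' ir in e2.
  have h2 : #|R| <= 2 by rewrite -ltnS.
  case/orP: (card2_rem h2 a2R b2R ab2 cR) => /eqP h'.
  - by rewrite -h' ec in n2a.
  - by rewrite -h' ec in n2b.
have part1 : clique_number e <= #|T| - 3.
  rewrite omK -hcard; clear -m3; lia.
split => //; split; last first.
  case=> f [fb _]; have := bij_eq_card fb; rewrite card_ord => h5.
  move: part1; rewrite omK h5 => p1. clear -p1 K2. lia.
move=> heq.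
have R3 : #|R| = 3 by move: heq; rewrite omK -hcard => h'; clear -h' K2; lia.
have R3' : #|R| <= 3 by rewrite R3.
have R3'' : 3 <= #|R| by rewrite R3.
have Rs : forall v, v \in K -> exists r, [/\ r \in R,
    (forall w, w \in R -> e v w -> w = r),
    (forall w w', w \in R -> w' \in R -> w != w' -> w != r -> w' != r -> e w w') &
    (forall v', v' \in K -> v' != v -> exists w, [/\ w \in R, w != r & e v' w])].
  move=> v vK; have [a [b [/andP [av bv] eab na nb d]]] := vp' v.
  have aR := inRab _ _ vK na av; have bR := inRab _ _ vK nb bv.
  have ab : a != b by apply/eqP => h'; rewrite h' ir in eab.
  have [r [rR ra rb]] := third R3'' aR bR ab.
  have ar : a != r by rewrite eq_sym.
  have br : b != r by rewrite eq_sym.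
  have cov := fun x => card3_rem (x := x) R3' aR bR rR ab ar br.
  exists r; split => //.
  - move=> w wR evw; case/or3P: (cov w wR) => /eqP h //.
      by move: na; rewrite -h evw.
    by move: nb; rewrite -h evw.
  - move=> w w' wR w'R ww' wr w'r.
    case/or3P: (cov w wR) => /eqP ?; case/or3P: (cov w' w'R) => /eqP ?; subst;
      try (by rewrite eqxx in ww'); try (by rewrite eqxx in wr); try (by rewrite eqxx in w'r).
    + exact: eab.
    + rewrite sy; exact: eab.
  - move=> v' v'K v'v; case/or4P: (d v' v'v) => h.
    + by move/eqP: h aR => h; rewrite -h inR v'K.
    + by move/eqP: h bR => h; rewrite -h inR v'K.
    + by exists a; split; rewrite // eq_sym.
    + by exists b; split; rewrite // eq_sym.
have [r1 [r1R i1 ii1 iii1]] := Rs v1 v1K.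
have [r2 [r2R i2 ii2 iii2]] := Rs v2 v2K.
have [w [wR wr1 ew]] := iii1 v2 v2K v21.
have wr2 := i2 w wR ew; subst w.
have [w [wR2 r12 ew1]] := iii2 v1 v1K v12.
have wr1' := i1 w wR2 ew1; subst w.
have [s [sR sr1 sr2]] := third R3'' r1R r2R r12.
have r1s : r1 != s by rewrite eq_sym.
have r2s : r2 != s by rewrite eq_sym.
have cov := fun x => card3_rem (x := x) R3' r1R r2R sR r12 r1s r2s.
have e2s : e r2 s := ii1 r2 s r2R sR r2s wr1 sr1.
have e1s : e r1 s := ii2 r1 s r1R sR r1s r12 sr2.
have KR : forall x y, x \in K -> y \in R -> (x == y) = false.
  by move=> x y xK yR; apply/eqP => h; move: yR; rewrite -h inR xK.
case: (leqP #|K| 2) => hK; last first.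
  exfalso.
  have [v3 [v3K v31 v32]] := third hK v1K v2K v12.
  have [r3 [r3R i3 ii3 iii3]] := Rs v3 v3K.
  have [w [wR3 r31 ew3]] := iii1 v3 v3K v31.
  have := i3 w wR3 ew3 => ?; subst w.
  have [w [wR4 r32 ew3']] := iii2 v3 v3K v32.
  have := i3 w wR4 ew3' => ?; subst w.
  have r3s : r3 = s.
    by case/or3P: (cov r3 r3R) => /eqP h //; [rewrite h eqxx in r31 | rewrite h eqxx in r32].
  subst r3.
  have e12 : e r1 r2 := ii3 r1 r2 r1R r2R r12 r1s r2s.
  apply: (nodom v1 r1); split; rewrite ?inE //; first by right.
  move=> x _; case: (boolP (x \in K)) => xK.
    case: (x =P v1) => [->|/eqP xv1]; first by [].
    by rewrite (clique_edge KC xK v1K xv1) !orbT.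
  rewrite -inR in xK.
  case/or3P: (cov x xK) => /eqP ->; first by rewrite eqxx orbT.
    by rewrite (sy r2 r1) e12 !orbT.
  by rewrite (sy s r1) e1s !orbT.
have Kcov := fun x => card2_rem (x := x) hK v1K v2K v12.
have Tcov : forall x, x = v1 \/ x = v2 \/ x = r2 \/ x = s \/ x = r1.
  move=> x; case: (boolP (x \in K)) => xK.
    by case/orP: (Kcov x xK) => /eqP ->; [left | right; left].
  rewrite -inR in xK.
  by case/or3P: (cov x xK) => /eqP ->; [do 4 right | do 2 right; left | do 3 right; left].
have n12 : e r1 r2 = false.
  apply/negP => e12.
  have RC : is_clique e R.
    apply/forall_inP => x xR; apply/forall_inP => y yR; apply/implyP => xy.
    case/or3P: (cov x xR) => /eqP ?; case/or3P: (cov y yR) => /eqP ?; subst;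
      try (by rewrite eqxx in xy);
      first [exact e12 | exact e1s | exact e2s | rewrite sy; first [exact e12 | exact e1s | exact e2s]].
  have := Kmax R RC; rewrite R3 => h'; clear -h' hK; lia.
have nv1r2 : e v1 r2 = false.
  by apply/negP => h; move: (i1 r2 r2R h) => h'; rewrite h' eqxx in r12.
have nv1s : e v1 s = false.
  by apply/negP => h; move: (i1 s sR h) => h'; rewrite h' eqxx in sr1.
have nv2r1 : e v2 r1 = false.
  by apply/negP => h; move: (i2 r1 r1R h) => h'; rewrite h' eqxx in r12.
have nv2s : e v2 s = false.
  by apply/negP => h; move: (i2 s sR h) => h'; rewrite h' eqxx in sr2.
have ev12 : e v1 v2 := clique_edge KC v1K v2K v12.
pose f := fun x => if x == v1 then @Ordinal 5 0 isT else if x == v2 then @Ordinal 5 1 isT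
  else if x == r2 then @Ordinal 5 2 isT else if x == s then @Ordinal 5 3 isT else @Ordinal 5 4 isT.
pose g := fun i : 'I_5 => match nat_of_ord i with 0 => v1 | 1 => v2 | 2 => r2 | 3 => s | _ => r1 end.
have d1 := KR _ _ v2K r2R.
have d2 := KR _ _ v2K sR.
have d3 := KR _ _ v2K r1R.
have d4 := KR _ _ v1K r2R.
have d5 := KR _ _ v1K sR.
have d6 := KR _ _ v1K r1R.
have d7 : (v2 == v1) = false by apply/negbTE.
have d8 : (r1 == r2) = false by apply/negbTE; rewrite eq_sym.
have d9 : (r1 == s) = false by apply/negbTE.
have d10 : (r2 == s) = false by apply/negbTE.
have d11 : (s == r2) = false by apply/negbTE; rewrite eq_sym.
have D := (d1, d2, d3, d4, d5, d6, d7, d8, d9, d10, d11).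
have sD : forall x y : T, (x == y) = (y == x) by move=> x y; exact: eq_sym.
have fv1 : nat_of_ord (f v1) = 0 by rewrite /f eqxx.
have fv2 : nat_of_ord (f v2) = 1 by rewrite /f d7 eqxx.
have fr2 : nat_of_ord (f r2) = 2 by rewrite /f (sD r2 v1) d4 (sD r2 v2) d1 eqxx.
have fs : nat_of_ord (f s) = 3 by rewrite /f (sD s v1) d5 (sD s v2) d2 d11 eqxx.
have fr1 : nat_of_ord (f r1) = 4 by rewrite /f (sD r1 v1) d6 (sD r1 v2) d3 d8 d9.
have FV := (fv1, fv2, fr2, fs, fr1).
exists f; split.
  exists g.
    move=> x; case: (Tcov x) => [->|[->|[->|[->|->]]]]; rewrite /g ?FV //.
  case=> [[|[|[|[|[|i]]]]] Hi] //; apply: val_inj; rewrite /= ?FV //.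
have E := (ev12, e2s, e1s, nv1r2, nv1s, nv2r1, nv2s, n12).
move=> x y; case: (Tcov x) => [->|[->|[->|[->|->]]]]; case: (Tcov y) => [->|[->|[->|[->|->]]]]; rewrite /C5_rel ?FV ?ir //=;
  (try by rewrite ?E); by rewrite sy ?E.
Qed.
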